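(* Let $d,N,m$ be positive integers with $m\ge d$ and $N\ge d$. Let $X\in\mathbb{R}^{d\times m}$ be a data matrix with $XX^T=I_d$ (whitened data). Consider the two-layer linear network $f(x)=W_2W_1x$ with $W_1\in\mathbb{R}^{N\times d}$, $W_2\in\mathbb{R}^{1\times N}$, whose initial weights satisfy $\|W_1^{(0)}\|_F=\|W_2^{(0)}\|_F=\sigma$ with $0<\sigma\ll 1$. Targets are $Y=\beta^TX$ with $\beta\in\mathbb{R}^d$ having i.i.d. entries $\beta_i\sim\mathcal{N}(0,1/d)$; write $\hat\beta=\beta/\|\beta\|$. Define the initial NTK $K^{(0)}=X^T\big(W_1^{(0)T}W_1^{(0)}+\|W_2^{(0)}\|^2 I_d\big)X$ and the final NTK (after training by gradient flow on the mean squared error) $K^{(f)}=\|\beta\|\,X^T(\hat\beta\hat\beta^T+I_d)X+O(\sigma^2)$. Then, neglecting additive $O(\sigma^2)$ terms, the expected kernel alignment $\mathbb{E}_\beta\big[\mathrm{KA}(K^{(f)},K^{(0)})\big]$, viewed as a function of $W_1^{(0)}$ over all $W_1^{(0)}$ with $\|W_1^{(0)}\|_F=\sigma$, is maximized by high-rank isotropic initializations, i.e. by $W_1^{(0)}$ whose $d$ singular values $s_1,\dots,s_d$ all have equal absolute value ($s_j^2=\sigma^2/d$ for all $j$).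
   Context: The kernel alignment of two $m\times m$ matrices is $\mathrm{KA}(K^{(f)},K^{(0)})=\dfrac{\operatorname{Tr}(K^{(f)}K^{(0)})}{\|K^{(f)}\|_F\,\|K^{(0)}\|_F}$. The expectation is over the random task vector $\beta$. The expression for $K^{(f)}$ is the asymptotic (infinite-training-time) neural tangent kernel of this network in the small-initialization regime, and is taken as given. *)

(* Defs.v *)
From HB Require Import structures.
From mathcomp Require Import all_boot all_order all_algebra.
From mathcomp Require Import all_classical all_reals all_analysis.
Set Implicit Arguments. Unset Strict Implicit. Unset Printing Implicit Defensive.
Import Order.TTheory GRing.Theory Num.Theory.
Local Open Scope classical_set_scope.
Local Open Scope ring_scope.

Section Defs.
Variable R : realType.

Definition frob (p q : nat) (A : 'M[R]_(p, q)) : R :=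
  Num.sqrt (\sum_(i < p) \sum_(j < q) A i j ^+ 2).

Definition KA (m : nat) (K1 K2 : 'M[R]_m) : R :=
  \tr (K1 *m K2) / (frob K1 * frob K2).

Definition K0 (d m N : nat) (X : 'M[R]_(d, m)) (W1 : 'M[R]_(N, d))
  (W2 : 'M[R]_(1, N)) : 'M[R]_m :=
  X^T *m (W1^T *m W1 + (frob W2 ^+ 2)%:M) *m X.

Definition bhat (d : nat) (b : 'cV[R]_d) : 'cV[R]_d := (frob b)^-1 *: b.

(* final NTK with the O(sigma^2) term neglected:
   Kf = ||beta|| X^T (bhat bhat^T + I_d) X *)
Definition Kf (d m : nat) (X : 'M[R]_(d, m)) (b : 'cV[R]_d) : 'M[R]_m :=
  frob b *: (X^T *m (bhat b *m (bhat b)^T + 1%:M) *m X).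

Definition has_singular_values (N d : nat) (W : 'M[R]_(N, d)) (s : 'rV[R]_d) :
  Prop :=
  (forall j, 0 <= s 0 j) /\
  exists (U : 'M[R]_(N, d)) (V : 'M[R]_d),
    U^T *m U = 1%:M /\ V^T *m V = 1%:M /\ W = U *m diag_mx s *m V^T.

Definition isotropic (N d : nat) (sigma : R) (W : 'M[R]_(N, d)) : Prop :=
  exists s : 'rV[R]_d, has_singular_values W s /\
    forall j, s 0 j ^+ 2 = sigma ^+ 2 / d%:R.

Section Prob.
Context (dT : measure_display) (Omega : measurableType dT)
  (P : probability Omega R).

Definition mutually_independent (d : nat) (beta : 'I_d -> {RV P >-> R}) : Prop :=
  forall B : 'I_d -> set R, (forall i, measurable (B i)) ->
    P (\bigcap_(i in [set: 'I_d]) (beta i @^-1` B i)) =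
    (\big[*%E/1%E]_(i < d) P (beta i @^-1` B i))%E.

Definition iid_gaussian (d : nat) (beta : 'I_d -> {RV P >-> R}) (v : R) : Prop :=
  mutually_independent beta /\
  forall i (A : set R), measurable A ->
    distribution P (beta i) A = normal_prob 0 (Num.sqrt v) A.

Definition betavec (d : nat) (beta : 'I_d -> {RV P >-> R}) (w : Omega) :
  'cV[R]_d := \col_i beta i w.

Definition expected_KA (d m N : nat) (beta : 'I_d -> {RV P >-> R})
  (X : 'M[R]_(d, m)) (W1 : 'M[R]_(N, d)) (W2 : 'M[R]_(1, N)) : \bar R :=
  (\int[P]_w (KA (Kf X (betavec beta w)) (K0 X W1 W2))%:E)%E.

End Prob.
End Defs.

(* Main.v *)
Require Import Defs.
From HB Require Import structures.
From mathcomp Require Import all_boot all_order all_algebra.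
From mathcomp Require Import all_classical all_reals all_analysis.
From mathcomp Require Import ring lra perm.
Import Order.TTheory GRing.Theory Num.Theory.
Import numFieldTopology.Exports numFieldNormedType.Exports.
Local Open Scope classical_set_scope.
Local Open Scope ring_scope.
Set Implicit Arguments. Unset Strict Implicit. Unset Printing Implicit Defensive.
Section Alg.
Variable R : realType.

Lemma frobE p q (A : 'M[R]_(p,q)) : frob A = Num.sqrt (\tr (A *m A^T)).
Proof.
rewrite /frob /mxtrace; congr Num.sqrt; apply: eq_bigr => i _.
rewrite mxE; apply: eq_bigr => j _; by rewrite mxE expr2.
Qed.

Lemma tr_ge0 p q (A : 'M[R]_(p,q)) : 0 <= \tr (A *m A^T).
Proof.
rewrite /mxtrace; apply: sumr_ge0 => i _; rewrite mxE; apply: sumr_ge0 => j _.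
by rewrite mxE -expr2 sqr_ge0.
Qed.

Lemma frob2 p q (A : 'M[R]_(p,q)) : frob A ^+ 2 = \tr (A *m A^T).
Proof. by rewrite frobE sqr_sqrtr // tr_ge0. Qed.

Lemma tr_conj d m (X : 'M[R]_(d,m)) (B C : 'M[R]_d) : X *m X^T = 1%:M ->
  \tr ((X^T *m B *m X) *m (X^T *m C *m X)) = \tr (B *m C).
Proof.
move=> XX.
have -> : (X^T *m B *m X) *m (X^T *m C *m X) = X^T *m (B *m C *m X).
  by rewrite -!mulmxA (mulmxA X) XX mul1mx.
by rewrite mxtrace_mulC -!mulmxA XX mulmx1.
Qed.

Lemma frob_conj d m (X : 'M[R]_(d,m)) (B : 'M[R]_d) : X *m X^T = 1%:M ->
  frob (X^T *m B *m X) = frob B.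
Proof.
move=> XX; rewrite !frobE; congr Num.sqrt.
have -> : (X^T *m B *m X)^T = X^T *m B^T *m X by rewrite !trmx_mul trmxK mulmxA.
exact: tr_conj.
Qed.

Lemma frobZ p q (a : R) (A : 'M[R]_(p,q)) : frob (a *: A) = `|a| * frob A.
Proof.
rewrite !frobE.
have -> : (a *: A) *m (a *: A)^T = (a * a) *: (A *m A^T).
  by rewrite linearZ /= -scalemxAl -scalemxAr scalerA.
rewrite mxtraceZ.
by rewrite -expr2 sqrtrM ?sqr_ge0 // sqrtr_sqr.
Qed.

End Alg.
Section KAF.
Variable R : realType.

Definition sq d (x : 'I_d -> R) := \sum_k x k ^+ 2.
Definition hh d (x : 'I_d -> R) (i j : 'I_d) := x i * x j / sq x.
Definition Pm d (x : 'I_d -> R) : 'M[R]_d := \matrix_(i, j) hh x i j.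

Lemma sq_ge0 d (x : 'I_d -> R) : 0 <= sq x.
Proof. by apply: sumr_ge0 => i _; rewrite sqr_ge0. Qed.

Lemma frob_col d (b : 'cV[R]_d) : frob b = Num.sqrt (sq (fun k => b k 0)).
Proof. by rewrite /frob /sq; congr Num.sqrt; apply: eq_bigr => i _; rewrite big_ord1. Qed.

Lemma bhat_outer d (b : 'cV[R]_d) : bhat b *m (bhat b)^T = Pm (fun k => b k 0).
Proof.
apply/matrixP => i j; rewrite !mxE big_ord1 /bhat !mxE frob_col /hh.
set s := sq _.
have s0 : 0 <= s by exact: sq_ge0.
rewrite mulrACA -invfM -expr2 sqr_sqrtr //.
by rewrite mulrC.
Qed.

Lemma Pm_trace d (x : 'I_d -> R) : sq x != 0 -> \tr (Pm x) = 1.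
Proof.
move=> s0; rewrite /mxtrace.
under eq_bigr do rewrite mxE /hh -expr2.
by rewrite -mulr_suml divff.
Qed.

Lemma Pm_idem d (x : 'I_d -> R) : sq x != 0 -> Pm x *m Pm x = Pm x.
Proof.
move=> s0; apply/matrixP => i j; rewrite !mxE /hh.
under eq_bigr do rewrite !mxE /hh.
transitivity (x i * x j / sq x * (\sum_k x k ^+ 2 / sq x)).
  rewrite mulr_sumr; apply: eq_bigr => k _; rewrite expr2.
  by field.
by rewrite -mulr_suml divff // mulr1.
Qed.

Lemma Pm_tr d (x : 'I_d -> R) : (Pm x)^T = Pm x.
Proof. by apply/matrixP => i j; rewrite !mxE /hh (mulrC (x j)). Qed.

Lemma Pm_eq0 d (x : 'I_d -> R) : sq x = 0 -> forall i j, hh x i j = 0.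
Proof. by move=> s0 i j; rewrite /hh s0 invr0 mulr0. Qed.

Lemma KA_formula d m N (X : 'M[R]_(d, m)) (W : 'M[R]_(N, d)) (W2 : 'M[R]_(1, N))
  (b : 'cV[R]_d) : X *m X^T = 1%:M ->
  KA (Kf X b) (K0 X W W2) =
  \sum_i \sum_j ((((W^T *m W) j i + (i == j)%:R *
      (frob W2 ^+ 2 + \tr (W^T *m W) + frob W2 ^+ 2 * d%:R)) /
      (Num.sqrt (d%:R + 3) * frob (W^T *m W + (frob W2 ^+ 2)%:M))) *
      hh (fun k => b k 0) i j).
Proof.
move=> XX.
set x := (fun k => b k 0).
set A := W^T *m W; set s2 := frob W2 ^+ 2.
set C := A + s2%:M.
set c := s2 + \tr A + s2 * d%:R.
set D := Num.sqrt (d%:R + 3) * frob C.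
rewrite /KA /Kf /K0 -/A -/s2 -/C bhat_outer.
rewrite frobZ frob_conj // frob_conj // -scalemxAl mxtraceZ tr_conj //.
have fb0 : 0 <= frob b by rewrite frob_col sqrtr_ge0.
rewrite ger0_norm //.
have [s0|s0] := eqVneq (sq x) 0.
  have -> : frob b = 0 by rewrite frob_col -/x s0 sqrtr0.
  rewrite !mul0r; symmetry; apply: big1 => i _; apply: big1 => j _.
  by rewrite Pm_eq0 // mulr0.
have fbp : 0 < frob b.
  by rewrite frob_col -/x sqrtr_gt0 lt0r s0 sq_ge0.
have F1 : frob (Pm x + 1%:M) = Num.sqrt (d%:R + 3).
  rewrite frobE linearD /= Pm_tr trmx1 mulmxDl !mulmxDr Pm_idem // mul1mx mulmx1.
  rewrite mulmx1 !mxtraceD Pm_trace // mxtrace1; congr Num.sqrt.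
  lra.
rewrite F1.
have -> : forall t, frob b * t / (frob b * Num.sqrt (d%:R + 3) * frob C) = t / D.
  move=> t; rewrite /D.
  have [->|f0] := eqVneq (frob C) 0; first by rewrite !mulr0 !invr0 !mulr0.
  have s3 : Num.sqrt (d%:R + 3) != 0 :> R.
    by rewrite gt_eqF // sqrtr_gt0; apply: ltr_wpDl => //; exact: ler0n.
  by field; rewrite s3 f0 gt_eqF.
have tr1 : \tr (Pm x) = 1 by exact: Pm_trace.
have sumh : \sum_i hh x i i = 1.
  by rewrite -tr1 /mxtrace; apply: eq_bigr => i _; rewrite mxE.
rewrite mulmxDl mul1mx /C mulmxDr mul_mx_scalar !mxtraceD mxtraceZ tr1 mxtrace_scalar.
have -> : \tr (Pm x *m A) = \sum_i \sum_j A j i * hh x i j.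
  rewrite /mxtrace; apply: eq_bigr => i _; rewrite mxE; apply: eq_bigr => j _.
  by rewrite mxE mulrC.
have E1 : forall i, \sum_j (i == j)%:R * c / D * hh x i j = c / D * hh x i i.
  move=> i; rewrite (bigD1 i) //= eqxx big1 ?addr0; first by rewrite mul1r.
  by move=> j /negbTE; rewrite eq_sym => ->; rewrite !mul0r.
rewrite [RHS](eq_bigr (fun i => \sum_j A j i * hh x i j / D + c / D * hh x i i)); last first.
  move=> i _; rewrite -E1 -big_split; apply: eq_bigr => j _ /=; ring.
rewrite big_split /= -mulr_sumr sumh.
rewrite [X in _ = X + _](eq_bigr (fun i => (\sum_j A j i * hh x i j) / D)); last first.
  by move=> i _; rewrite mulr_suml.
rewrite -mulr_suml /c -mulr_natr; ring.
Qed.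

Definition cf d N (W : 'M[R]_(N, d)) (W2 : 'M[R]_(1, N)) (i j : 'I_d) :=
  ((W^T *m W) j i + (i == j)%:R *
      (frob W2 ^+ 2 + \tr (W^T *m W) + frob W2 ^+ 2 * d%:R)) /
      (Num.sqrt (d%:R + 3) * frob (W^T *m W + (frob W2 ^+ 2)%:M)).

Lemma KA_formula' d m N (X : 'M[R]_(d, m)) (W : 'M[R]_(N, d)) (W2 : 'M[R]_(1, N))
  (b : 'cV[R]_d) : X *m X^T = 1%:M ->
  KA (Kf X b) (K0 X W W2) = \sum_i \sum_j cf W W2 i j * hh (fun k => b k 0) i j.
Proof. exact: KA_formula. Qed.

End KAF.
Section Vec.
Variables (R : realType) (d : nat).
Definition Vt := 'I_d -> R.
HB.instance Definition _ := Choice.on Vt.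
HB.instance Definition _ := isPointed.Build Vt (fun _ => 0).
Definition rect (B : 'I_d -> set R) : set Vt :=
  \bigcap_(i in [set: 'I_d]) ((fun x : Vt => x i) @^-1` B i).
Definition Grect : set (set Vt) :=
  [set A | exists B : 'I_d -> set R, (forall i, measurable (B i)) /\ A = rect B].
Definition VT := g_sigma_algebraType Grect.

Lemma mvec dT (T : measurableType dT) (f : 'I_d -> T -> R) :
  (forall k, measurable_fun setT (f k)) ->
  measurable_fun setT (fun t => (fun k => f k t) : VT).
Proof.
move=> mf; have mG : (@measurable _ VT) = <<s Grect >> := erefl.
refine (@measurability _ _ T VT setT (fun t => (fun k => f k t) : VT) Grect mG _).
move=> _ [A [B [mB ->]] <-]; rewrite setTI.
have -> : (fun t => (fun k => f k t) : VT) @^-1` rect B =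
    \bigcap_(i in [set: 'I_d]) (f i @^-1` B i).
  by apply/seteqP; split => t /= H i _; exact: H.
apply: fin_bigcap_measurable; first exact: finite_finset.
by move=> i _; rewrite -[X in measurable X]setTI; exact: mf.
Qed.

Lemma mcoord k : measurable_fun setT (fun x : VT => x k).
Proof.
move=> _ A mA; rewrite setTI; apply: sub_sigma_algebra.
exists (fun i => if i == k then A else setT); split.
  by move=> i; case: ifP.
apply/seteqP; split => x /=.
  by move=> Ax i _ /=; case: ifP => // /eqP ->.
by move=> /(_ k I) /=; rewrite eqxx.
Qed.

Lemma Grect_setI : setI_closed Grect.
Proof.
move=> _ _ [B [mB ->]] [C [mC ->]]; exists (fun i => B i `&` C i); split.
  by move=> i; exact: measurableI.
apply/seteqP; split => x /=.
  by move=> [H1 H2] i _; split; [exact: H1|exact: H2].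
by move=> H; split => i _; have [] := H i I.
Qed.

Lemma Grect_setT : Grect setT.
Proof.
exists (fun _ => setT); split => //.
by apply/seteqP; split => x //=.
Qed.

End Vec.

Section Meas.
Variable R : realType.

Lemma minv : measurable_fun [set: R] (@GRing.inv R).
Proof.
have -> : [set: R] = ~` [set 0] `|` [set 0] by rewrite setUC setUv.
have c0 : @closed R [set 0] := @accessible_closed_set1 R (hausdorff_accessible (@Rhausdorff R)) 0.
apply/measurable_funU => //.
- by apply: measurableC.
split; last exact: measurable_fun_set1.
apply: measurable_realfun.open_continuous_measurable_fun; first exact: closed_openC.
move=> x; rewrite inE /= => x0; apply: inv_continuous; exact/eqP.
Qed.

Lemma mhh d dT (T : measurableType dT) (f : 'I_d -> T -> R) i j :
  (forall k, measurable_fun setT (f k)) ->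
  measurable_fun setT (fun t => hh (fun k => f k t) i j).
Proof.
move=> mf; rewrite /hh /sq.
apply: measurable_realfun.measurable_funM.
  by apply: measurable_realfun.measurable_funM; apply: mf.
apply: (measurableT_comp minv).
apply: measurable_sum => k.
by apply: measurable_realfun.measurable_funX; apply: mf.
Qed.

Lemma sq_le d (x : 'I_d -> R) k : x k ^+ 2 <= sq x.
Proof.
rewrite /sq (bigD1 k) //= lerDl; apply: sumr_ge0 => i _; exact: sqr_ge0.
Qed.

Lemma hh_bound d (x : 'I_d -> R) i j : `|hh x i j| <= 1.
Proof.
rewrite /hh.
have [s0|s0] := eqVneq (sq x) 0; first by rewrite s0 invr0 mulr0 normr0.
have sp : 0 < sq x by rewrite lt0r s0 sq_ge0.
rewrite normrM normfV (gtr0_norm sp) ler_pdivrMr // mul1r.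
have hi := sq_le x i; have hj := sq_le x j.
rewrite ler_norml; apply/andP; split; nra.
Qed.

End Meas.
Section Prob.
Variables (R : realType) (d : nat) (dT : measure_display) (Omega : measurableType dT)
  (P : probability Omega R) (beta : 'I_d -> {RV P >-> R}) (v : R).
Hypothesis hb : iid_gaussian beta v.
Hypothesis v0 : 0 < v.
Local Notation s := (Num.sqrt v).

Lemma mopp : measurable_fun [set: R] (-%R : R -> R).
Proof.
have -> : (-%R : R -> R) = (fun x => -1 * x) by apply/funext => x; rewrite mulN1r.
by apply: measurable_realfun.measurable_funM => //; exact: measurable_cst.
Qed.

Lemma normal_sym (B : set R) : measurable B ->
  normal_prob 0 s ((-%R) @^-1` B) = normal_prob 0 s B.
Proof.
move=> mB; rewrite /normal_prob.
have s0 : s != 0 by rewrite gt_eqF // sqrtr_gt0.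
transitivity (\int[lebesgue_measure]_(x in (-%R) @^-1` B)
   (((fun y => (normal_pdf 0 s y)%:E) \o -%R) x))%E.
  apply: eq_integral => x _ /=; congr EFin.
  by rewrite /normal_pdf (negbTE s0) /normal_fun !subr0 sqrrN.
have mopp' : measurable_fun [set: measurableTypeR R] (-%R : measurableTypeR R -> measurableTypeR R) := mopp.
rewrite -(ge0_integral_pushforward mopp' lebesgue_measure mB) //.
- apply: eq_measure_integral => A mA _; exact: lebesgue_measureN.
- apply/measurable_realfun.measurable_EFinP; apply: measurable_funS (measurable_normal_pdf 0 s) => //.
- by move=> y _; rewrite lee_fin normal_pdf_ge0.
Qed.

Definition vec1 (w : Omega) : VT R d := fun k => beta k w.
Definition vecT (e : 'I_d -> R) (p : {perm 'I_d}) (w : Omega) : VT R d :=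
  fun k => e k * beta (p k) w.

Lemma m_vec1 : measurable_fun setT vec1.
Proof. by apply: mvec => k; exact: measurable_funPT. Qed.

Lemma m_vecT e p : measurable_fun setT (vecT e p).
Proof.
by apply: mvec => k; apply: measurable_realfun.measurable_funM.
Qed.

Lemma law_T e p (he : forall k, e k = 1 \/ e k = -1) (B : 'I_d -> set R) :
  (forall i, measurable (B i)) ->
  P (vecT e p @^-1` rect B) = P (vec1 @^-1` rect B).
Proof.
move=> mB; case: hb => hind hdist.
have -> : vec1 @^-1` rect B = \bigcap_(i in [set: 'I_d]) (beta i @^-1` B i).
  by apply/seteqP; split => w /= H i _; exact: H.
pose C := fun i => [set y | B (p^-1%g i) (e (p^-1%g i) * y)].
have mC : forall i, measurable (C i).
  move=> i.
  have : measurable_fun setT (fun y : R => e (p^-1%g i) * y).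
    by apply: measurable_realfun.measurable_funM.
  by move=> /(_ measurableT _ (mB (p^-1%g i))); rewrite setTI.
have -> : vecT e p @^-1` rect B = \bigcap_(i in [set: 'I_d]) (beta i @^-1` C i).
  apply/seteqP; split => w /= H i _.
  - by have := H (p^-1%g i) I; rewrite /vecT /C /= permKV.
  - by have := H (p i) I; rewrite /vecT /C /= permK.
rewrite !hind //.
transitivity (\big[*%E/1%E]_(i < d) normal_prob 0 s (B (p^-1%g i))).
  apply: eq_bigr => i _.
  have := hdist i _ (mC i); rewrite /distribution /pushforward => ->.
  rewrite /C; case: (he (p^-1%g i)) => ->.
  - by congr normal_prob; apply/seteqP; split => y /=; rewrite mul1r.
  - rewrite -(normal_sym (mB (p^-1%g i))); congr normal_prob; apply/seteqP; split => y /=;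
    by rewrite mulN1r.
rewrite [RHS](reindex_inj (@perm_inj _ (p^-1%g))).
apply: eq_bigr => i _.
by have := hdist (p^-1%g i) _ (mB (p^-1%g i)); rewrite /distribution /pushforward => ->.
Qed.

Lemma integrable_h (phi : Omega -> VT R d) (h : VT R d -> R) :
  measurable_fun setT phi -> measurable_fun setT h -> (forall x, `|h x| <= 1) ->
  P.-integrable setT (EFin \o h \o phi).
Proof.
move=> mphi mh hb1; apply: measurable_bounded_integrable => //.
- by move: (probability_setT P) => /= ->; rewrite ltry.
- exact: measurableT_comp.
- exists 1; split => // M M1 x _; apply: le_trans (hb1 _) _; exact: ltW.
Qed.

Lemma transfer e p (he : forall k, e k = 1 \/ e k = -1) (h : VT R d -> R) :
  measurable_fun setT h -> (forall x, `|h x| <= 1) ->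
  (\int[P]_w (h (vec1 w))%:E = \int[P]_w (h (vecT e p w))%:E)%E.
Proof.
move=> mh hb1.
have m1 := m_vec1; have m2 := m_vecT e p.
have mEh := (measurable_realfun.measurable_EFinP _ _).2 mh.
have i1 := integrable_h m1 mh hb1; have i2 := integrable_h m2 mh hb1.
rewrite -(preimage_setT vec1) in i1; rewrite -(preimage_setT (vecT e p)) in i2.
transitivity (\int[pushforward P vec1]_(y in setT) (EFin \o h) y)%E.
  by rewrite (integral_pushforward m1 mEh i1) // preimage_setT.
transitivity (\int[pushforward P (vecT e p)]_(y in setT) (EFin \o h) y)%E; last first.
  by rewrite (integral_pushforward m2 mEh i2) // preimage_setT.
apply: eq_measure_integral => A mA _.
pose X1 : {mfun Omega >-> VT R d} := HB.pack vec1 (isMeasurableFun.Build _ _ _ _ _ m1).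
pose X2 : {mfun Omega >-> VT R d} := HB.pack (vecT e p) (isMeasurableFun.Build _ _ _ _ _ m2).
have := @measure_unique _ R (VT R d) (@Grect R d) (fun _ => setT) erefl (@Grect_setI R d)
  (fun _ => @Grect_setT R d) _ (distribution P X1) (distribution P X2) _ _ A mA.
apply.
- by apply/seteqP; split => x // _; exists 0%N.
- by move=> _ [B [mB ->]]; exact: (esym (@law_T e p he B mB)).
- by move=> k; move: (probability_setT (distribution P X1)) => /= ->; rewrite ltry.
Qed.

Definition Eh i j := (\int[P]_w (hh (fun k => beta k w) i j)%:E)%E.

Lemma mhb i j : measurable_fun setT (fun x : VT R d => hh x i j).
Proof. exact: (@mhh R d _ (VT R d) (fun k (x : VT R d) => x k) i j (@mcoord R d)). Qed.

Lemma Eh_int i j : P.-integrable setT (fun w => (hh (fun k => beta k w) i j)%:E).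
Proof. exact: (integrable_h m_vec1 (mhb i j) (fun x => hh_bound x i j)). Qed.

Lemma Eh_fin i j : Eh i j \is a fin_num.
Proof. exact: integrable_fin_num (Eh_int i j). Qed.

Lemma sqT e (p : {perm 'I_d}) (x : 'I_d -> R) : (forall k, e k = 1 \/ e k = -1) ->
  sq (fun k => e k * x (p k)) = sq x.
Proof.
move=> he; rewrite /sq.
have -> : \sum_k (e k * x (p k)) ^+ 2 = \sum_k x (p k) ^+ 2.
  apply: eq_bigr => k _; rewrite exprMn.
  by case: (he k) => ->; rewrite ?expr1n ?sqrrN ?expr1n mul1r.
by rewrite [RHS](reindex_inj (@perm_inj _ p)).
Qed.

Lemma Eh_off i j : i != j -> Eh i j = 0%E.
Proof.
move=> ij.
pose e := fun k : 'I_d => if k == i then -1 else 1 : R.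
have he : forall k, e k = 1 \/ e k = -1.
  by move=> k; rewrite /e; case: ifP => _; [right|left].
have H : Eh i j = ((-1)%:E * Eh i j)%E.
  transitivity (\int[P]_w ((fun x => hh x i j) (vecT e 1%g w))%:E)%E.
    exact: (transfer 1%g he (mhb i j) (fun x => hh_bound x i j)).
  rewrite /Eh -integralZl //; last exact: Eh_int.
  apply: eq_integral => w _; rewrite -EFinM; congr EFin.
  rewrite /hh /vecT (@sqT e 1%g (fun k => beta k w) he) !perm1 /e eqxx.
  rewrite eq_sym (negbTE ij); ring.
move: (Eh_fin i j) H; case: (Eh i j) => [r| |] //= _.
by rewrite -EFinM => -[hr]; congr EFin; lra.
Qed.

Lemma Eh_diag i j : Eh i i = Eh j j.
Proof.
pose e := fun k : 'I_d => 1 : R.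
have he : forall k, e k = 1 \/ e k = -1 by move=> k; left.
transitivity (\int[P]_w ((fun x => hh x i i) (vecT e (tperm i j) w))%:E)%E.
  exact: (transfer (tperm i j) he (mhb i i) (fun x => hh_bound x i i)).
rewrite /Eh; apply: eq_integral => w _; congr EFin.
rewrite /hh /vecT (@sqT e (tperm i j) (fun k => beta k w) he) tpermL /e mul1r.
by [].
Qed.

Lemma Eh_val (i0 : 'I_d) i j : Eh i j = ((i == j)%:R * fine (Eh i0 i0))%:E.
Proof.
have [<-|ij] := eqVneq i j; last by rewrite Eh_off // mul0r.
by rewrite mul1r (Eh_diag i i0) fineK // Eh_fin.
Qed.

Lemma Eh_ge0 (i0 : 'I_d) : 0 <= fine (Eh i0 i0).
Proof.
apply: fine_ge0; apply: integral_ge0 => w _; rewrite lee_fin /hh.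
by apply: mulr_ge0; [rewrite -expr2 sqr_ge0 | rewrite invr_ge0 sq_ge0].
Qed.

Lemma EKA_eq m N (X : 'M[R]_(d, m)) (W : 'M[R]_(N, d)) (W2 : 'M[R]_(1, N))
  (i0 : 'I_d) : X *m X^T = 1%:M ->
  expected_KA beta X W W2 = (fine (Eh i0 i0) * \sum_i cf W W2 i i)%:E.
Proof.
move=> XX; rewrite /expected_KA.
have bv : forall w, (fun k => betavec beta w k 0) = (fun k => beta k w).
  by move=> w; apply/funext => k; rewrite /betavec mxE.
transitivity (\int[P]_w (\sum_i \sum_j (cf W W2 i j)%:E *
    (hh (fun k => beta k w) i j)%:E))%E.
  apply: eq_integral => w _; rewrite KA_formula' // bv -sumEFin.
  apply: eq_bigr => i _; rewrite -sumEFin; apply: eq_bigr => j _; exact: EFinM.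
rewrite integral_sum //; last first.
  move=> i; apply: integrable_sum => // j _; apply: integrableZl => //; exact: Eh_int.
transitivity (\sum_i \sum_j ((cf W W2 i j)%:E * Eh i j))%E.
  apply: eq_bigr => i _; rewrite integral_sum //; last first.
    by move=> j; apply: integrableZl => //; exact: Eh_int.
  apply: eq_bigr => j _; rewrite integralZl //; exact: Eh_int.
transitivity (\sum_i (cf W W2 i i * fine (Eh i0 i0))%:E)%E.
  apply: eq_bigr => i _.
  under eq_bigr => j _ do rewrite (Eh_val i0) -EFinM.
  rewrite sumEFin (bigD1 i) //= eqxx mul1r big1 ?addr0 // => j ji.
  by rewrite eq_sym (negbTE ji) mul0r mulr0.
by rewrite sumEFin mulr_sumr; congr EFin; apply: eq_bigr => i _; rewrite mulrC.
Qed.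

End Prob.
Section Fin.
Variable R : realType.

Lemma cs d (y : 'I_d -> R) : (\sum_i y i) ^+ 2 <= d%:R * \sum_i y i ^+ 2.
Proof.
have H : 0 <= \sum_i \sum_j (y i - y j) ^+ 2.
  by apply: sumr_ge0 => i _; apply: sumr_ge0 => j _; exact: sqr_ge0.
have E2 : \sum_i \sum_j 2 * y i * y j = 2 * (\sum_i y i) ^+ 2.
  rewrite expr2 mulr_suml mulr_sumr; apply: eq_bigr => i _.
  rewrite mulr_sumr mulr_sumr; apply: eq_bigr => j _; ring.
have E : \sum_i \sum_j (y i - y j) ^+ 2 =
    2 * (d%:R * \sum_i y i ^+ 2) - 2 * (\sum_i y i) ^+ 2.
  transitivity (\sum_i (y i ^+ 2 *+ d + \sum_j y j ^+ 2 - \sum_j 2 * y i * y j)).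
    apply: eq_bigr => i _.
    transitivity (\sum_j (y i ^+ 2 + y j ^+ 2 - 2 * y i * y j)).
      by apply: eq_bigr => j _; ring.
    by rewrite sumrB big_split /= sumr_const card_ord.
  rewrite sumrB big_split /= E2 sumrMnl sumr_const card_ord.
  move: (\sum_(i < d) y i ^+ 2) (\sum_(i < d) y i) => a b.
  rewrite -[a *+ d]mulr_natl; ring.
move: H; rewrite E.
set a := \sum_(i < d) y i ^+ 2; set b := \sum_(i < d) y i.
move=> H; rewrite -(ler_pM2l (_ : 0 < 2%:R)) //; by rewrite -subr_ge0.
Qed.

Lemma frob_lb d N (W : 'M[R]_(N, d)) (s2 : R) : (0 < d)%N ->
  (\tr (W^T *m W) + d%:R * s2) ^+ 2 / d%:R <=
  \sum_i \sum_j (W^T *m W + s2%:M) i j ^+ 2.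
Proof.
move=> d0.
set C := W^T *m W + s2%:M.
have dp : 0 < d%:R :> R by rewrite ltr0n.
apply: (@le_trans _ _ (\sum_i C i i ^+ 2)).
  have -> : \tr (W^T *m W) + d%:R * s2 = \sum_i C i i.
    rewrite [RHS](eq_bigr (fun i => (W^T *m W) i i + s2)); last first.
      by move=> i _; rewrite /C !mxE eqxx mulr1n.
    by rewrite big_split /= sumr_const card_ord mulr_natl.
  by rewrite ler_pdivrMr // mulrC cs.
apply: ler_sum => i _; rewrite (bigD1 i) //= lerDl.
by apply: sumr_ge0 => j _; exact: sqr_ge0.
Qed.

Lemma iso_gram N d (sigma : R) (W : 'M[R]_(N, d)) :
  isotropic sigma W -> W^T *m W = (sigma ^+ 2 / d%:R)%:M.
Proof.
case=> s [[s0 [U [V [UU [VV ->]]]]] hs].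
have VV' : V *m V^T = 1%:M by apply: mulmx1C.
have DD : diag_mx s *m diag_mx s = (sigma ^+ 2 / d%:R)%:M.
  apply/matrixP => i j; rewrite mul_diag_mx !mxE.
  case: eqVneq => [->|_]; last by rewrite !mulr0n mulr0.
  by rewrite !mulr1n -expr2 hs.
rewrite !trmx_mul trmxK tr_diag_mx.
have -> : V *m (diag_mx s *m U^T) *m (U *m diag_mx s *m V^T) =
    V *m (diag_mx s *m (U^T *m U) *m diag_mx s) *m V^T.
  by rewrite !mulmxA.
by rewrite UU mulmx1 DD mul_mx_scalar -scalemxAl VV' scalemx1.
Qed.

Lemma sum_cf d N (W : 'M[R]_(N, d)) (W2 : 'M[R]_(1, N)) :
  \sum_i cf W W2 i i =
  (\tr (W^T *m W) + d%:R * (frob W2 ^+ 2 + \tr (W^T *m W) + frob W2 ^+ 2 * d%:R)) /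
  (Num.sqrt (d%:R + 3) * frob (W^T *m W + (frob W2 ^+ 2)%:M)).
Proof.
rewrite /cf -mulr_suml; congr (_ / _).
rewrite big_split /=; congr (_ + _).
by under eq_bigr do rewrite eqxx mul1r; rewrite sumr_const card_ord mulr_natl.
Qed.

Lemma trA_frob N d (W : 'M[R]_(N, d)) : \tr (W^T *m W) = frob W ^+ 2.
Proof. by rewrite frob2 mxtrace_mulC. Qed.

End Fin.
Theorem theorem1 (R : realType) (d N m : nat)
  (dT : measure_display) (Omega : measurableType dT) (P : probability Omega R)
  (beta : 'I_d -> {RV P >-> R}) (X : 'M[R]_(d, m)) (sigma : R)
  (W2 : 'M[R]_(1, N)) :
  (0 < d)%N -> (0 < N)%N -> (0 < m)%N -> (d <= m)%N -> (d <= N)%N ->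
  X *m X^T = 1%:M ->
  iid_gaussian beta (d%:R)^-1 ->
  0 < sigma ->
  frob W2 = sigma ->
  forall W1 W1iso : 'M[R]_(N, d),
    frob W1 = sigma -> frob W1iso = sigma -> isotropic sigma W1iso ->
    (expected_KA beta X W1 W2 <= expected_KA beta X W1iso W2)%E.
Proof.
move=> d0 N0 m0 dm dN XX hb s0 fW2 W1 Wi fW1 fWi iso.
have v0 : 0 < (d%:R : R)^-1 by rewrite invr_gt0 ltr0n.
pose i0 : 'I_d := Ordinal d0.
have E1 := EKA_eq hb v0 W1 W2 i0 XX.
have E2 := EKA_eq hb v0 Wi W2 i0 XX.
rewrite E1 E2 lee_fin.
apply: ler_wpM2l; first exact: Eh_ge0.
rewrite !sum_cf !trA_frob fW1 fWi fW2.
rewrite (iso_gram iso).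
have dp : 0 < d%:R :> R by rewrite ltr0n.
set Nn := (X in X / _ <= _).
have Nn0 : 0 <= Nn.
  have q : 0 <= sigma ^+ 2 := sqr_ge0 sigma.
  rewrite /Nn; apply: addr_ge0 => //; apply: mulr_ge0; first exact: ltW.
  apply: addr_ge0; first exact: addr_ge0.
  apply: mulr_ge0 => //; exact: ltW.
set a := sigma ^+ 2.
have S2 : \sum_i \sum_j ((a / d%:R)%:M + a%:M : 'M[R]_d) i j ^+ 2 =
    d%:R * (a / d%:R + a) ^+ 2.
  transitivity (\sum_(i < d) (a / d%:R + a) ^+ 2); last first.
    by rewrite sumr_const card_ord mulr_natl.
  apply: eq_bigr => i _; rewrite (bigD1 i) //= big1 ?addr0.
    by rewrite !mxE eqxx !mulr1n.
  by move=> j ji; rewrite !mxE eq_sym (negbTE ji) !mulr0n addr0 expr2 mulr0.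
have ap : 0 < a by rewrite /a exprn_gt0.
have F2p : 0 < frob ((a / d%:R)%:M + a%:M : 'M[R]_d).
  rewrite /frob S2 sqrtr_gt0; apply: mulr_gt0 => //; apply: exprn_gt0.
  by apply: addr_gt0 => //; apply: divr_gt0.
have F12 : frob ((a / d%:R)%:M + a%:M : 'M[R]_d) <= frob (W1^T *m W1 + a%:M).
  rewrite {1}/frob S2; apply: ler_wsqrtr.
  apply: le_trans (frob_lb W1 a d0).
  rewrite trA_frob fW1 -/a le_eqVlt; apply/orP; left; apply/eqP; field.
  by rewrite gt_eqF.
have c3 : 0 < Num.sqrt (d%:R + 3) :> R.
  by rewrite sqrtr_gt0; apply: ltr_wpDl => //; exact: ler0n.
apply: ler_wpM2l => //.
rewrite lef_pV2 ?posrE ?mulr_gt0 //; last first.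
  exact: lt_le_trans F12.
by apply: ler_wpM2l => //; exact: ltW.
Qed.
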